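(* Let $G=C_n$ be a cycle, for some $n\ge3$, and let $L$ be a list-assignment with $|L(v)|=3$ for every vertex $v$. If $\alpha$ and $\beta$ are $L$-colourings, neither of which is frozen, and the lists $L(v)$ are not all identical, then $\alpha\sim\beta$.
   Context: An $L$-colouring is a proper colouring $\varphi$ with $\varphi(v)\in L(v)$ for all $v$. A vertex $v$ is frozen under $\varphi$ if every colour of $L(v)\setminus\{\varphi(v)\}$ appears on a neighbour of $v$; a colouring is frozen if all vertices are frozen. $\alpha\sim\beta$ means $\alpha$ can be transformed into $\beta$ by a sequence of single-vertex recolouring steps, each changing one vertex's colour to another colour of its list so that the colouring remains a proper $L$-colouring. *)

(* Defs.v *)
From mathcomp Require Import all_boot.
From Stdlib Require Import Relations.
Set Implicit Arguments. Unset Strict Implicit. Unset Printing Implicit Defensive.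

Definition cycle_adj (n : nat) (i j : 'I_n) : bool :=
  (val j == (val i).+1 %% n) || (val i == (val j).+1 %% n).

(* Colours are natural numbers; a list assignment gives each vertex a list
   (finite set, represented as a duplicate-free seq) of colours. *)
Definition Lcolouring (n : nat) (L : 'I_n -> seq nat) (phi : 'I_n -> nat) : Prop :=
  (forall v, phi v \in L v) /\
  (forall u v, cycle_adj u v -> phi u != phi v).

Definition frozen_vertex (n : nat) (L : 'I_n -> seq nat) (phi : 'I_n -> nat) (v : 'I_n) : Prop :=
  forall c, c \in L v -> c != phi v -> exists u, cycle_adj u v /\ phi u = c.

Definition frozen (n : nat) (L : 'I_n -> seq nat) (phi : 'I_n -> nat) : Prop :=
  forall v, frozen_vertex L phi v.

Definition recolour_step (n : nat) (L : 'I_n -> seq nat) (a b : 'I_n -> nat) : Prop :=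
  Lcolouring L a /\ Lcolouring L b /\
  exists v, a v != b v /\ forall u, u != v -> a u = b u.

Definition reconfig (n : nat) (L : 'I_n -> seq nat) : relation ('I_n -> nat) :=
  clos_refl_trans _ (@recolour_step n L).

(* Main.v *)
Require Import Defs.
From mathcomp Require Import all_boot zify.
From Stdlib Require Import Relations Classical FunctionalExtensionality.
Set Implicit Arguments. Unset Strict Implicit. Unset Printing Implicit Defensive.

Lemma ord_gt0 n (x : 'I_n) : 0 < n.
Proof. by apply: leq_ltn_trans (ltn_ord x). Qed.

Definition sh n (x : 'I_n) (i : nat) : 'I_n := Ordinal (ltn_pmod (x + i) (ord_gt0 x)).

Lemma val_sh n (x : 'I_n) i : val (sh x i) = (x + i) %% n.
Proof. by []. Qed.

Lemma sh_sh n (x : 'I_n) i k : sh (sh x i) k = sh x (i + k).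
Proof. by apply: val_inj; rewrite /= modnDml addnA. Qed.

Lemma sh0 n (x : 'I_n) : sh x 0 = x.
Proof. by apply: val_inj; rewrite /= addn0 modn_small. Qed.

Lemma sh_eq n (x : 'I_n) i k : sh x i = sh x k -> i %% n = k %% n.
Proof. by move/(congr1 val)=> /= /eqP; rewrite eqn_modDl => /eqP. Qed.

Lemma sh_inj1 n (x y : 'I_n) : sh x 1 = sh y 1 -> x = y.
Proof.
move/(congr1 val)=> /= /eqP; rewrite !(addnC _ 1) eqn_modDl !modn_small //.
by move/eqP/val_inj.
Qed.

Lemma adjE n (a b : 'I_n) : cycle_adj a b = (b == sh a 1) || (a == sh b 1).
Proof. by rewrite /cycle_adj -!val_eqE /= !addn1. Qed.

Lemma adj_sym n (a b : 'I_n) : cycle_adj a b = cycle_adj b a.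
Proof. by rewrite /cycle_adj orbC. Qed.

Lemma sh1_neq n (x : 'I_n) : 2 <= n -> sh x 1 != x.
Proof.
move=> n2; apply/eqP => /(congr1 val) /=.
have := ltn_ord x; rewrite addn1 leq_eqVlt => /orP [/eqP E|lt].
  rewrite E modnn => E0; lia.
by rewrite modn_small //; lia.
Qed.

Lemma adj_irr n (x : 'I_n) : 2 <= n -> ~~ cycle_adj x x.
Proof. by move=> n2; rewrite adjE eq_sym (negbTE (sh1_neq x n2)). Qed.

Lemma sh_all n (u z : 'I_n) : z = sh u ((z + n - u) %% n).
Proof.
apply: val_inj; rewrite /= modnDmr.
have -> : u + (z + n - u) = z + n by have := ltn_ord u; lia.
by rewrite modnDr modn_small.
Qed.

Definition upd n (phi : 'I_n -> nat) (w : 'I_n) (d : nat) : 'I_n -> nat :=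
  fun z => if z == w then d else phi z.

Lemma nbr n (y v : 'I_n) : cycle_adj y v -> y = sh v 1 \/ sh y 1 = v.
Proof. by rewrite adjE => /orP [/eqP ->|/eqP ->]; [right|left]. Qed.

Lemma step_upd n (L : 'I_n -> seq nat) phi w d : 2 <= n ->
  Lcolouring L phi -> d \in L w -> d != phi w ->
  (forall y, cycle_adj y w -> phi y != d) ->
  recolour_step L phi (upd phi w d) /\ Lcolouring L (upd phi w d).
Proof.
move=> n2 [inL prop] dL dn nb.
have col : Lcolouring L (upd phi w d).
  split.
    by move=> v; rewrite /upd; case: eqP => [->|]; [|move=> _; apply: inL].
  move=> a b ab; rewrite /upd.
  case: (eqVneq a w) => [Ea|Na]; case: (eqVneq b w) => [Eb|Nb].
  - by move: ab; rewrite Ea Eb (negbTE (adj_irr w n2)).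
  - by rewrite eq_sym; apply: nb; rewrite adj_sym -Ea.
  - by apply: nb; rewrite -Eb.
  - by apply: prop.
split=> //; split; first by split.
split=> //; exists w; split; first by rewrite /upd eqxx eq_sym.
by move=> z zw; rewrite /upd (negbTE zw).
Qed.

Lemma rt_sym n (L : 'I_n -> seq nat) a b : reconfig L a b -> reconfig L b a.
Proof.
elim=> [x y [ca [cb [v [nv fr]]]]| x | x y z _ IH1 _ IH2].
- apply: rt_step; split=> //; split=> //; exists v; split; first by rewrite eq_sym.
  by move=> u uv; rewrite fr.
- exact: rt_refl.
- exact: rt_trans IH2 IH1.
Qed.

Lemma two_others (s : seq nat) x : uniq s -> size s = 3 ->
  exists e1 e2, [/\ e1 \in s, e2 \in s, e1 != x, e2 != x & e1 != e2].
Proof.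
case: s => [|a [|b [|c [|]]]] //= U _.
move: U; rewrite !inE !negb_or => /and3P [/andP [ab ac] bc _].
case: (eqVneq x a) => [->|xa].
  by exists b, c; rewrite !inE !eqxx !orbT; split => //; rewrite eq_sym.
case: (eqVneq x b) => [->|xb].
  by exists a, c; rewrite !inE !eqxx !orbT; split => //; rewrite eq_sym.
by exists a, b; rewrite !inE !eqxx !orbT; split => //; rewrite eq_sym.
Qed.

Definition freev n (L : 'I_n -> seq nat) phi (v : 'I_n) :=
  exists e, [/\ e \in L v, e != phi v & forall y, cycle_adj y v -> phi y != e].

Lemma not_frozen_free n (L : 'I_n -> seq nat) phi :
  ~ frozen L phi -> exists v, freev L phi v.
Proof.
move=> nf; apply: NNPP => H; apply: nf => v c cL cn.
apply: NNPP => H2; apply: H; exists v, c; split=> // y yv; apply/eqP => E.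
by apply: H2; exists y.
Qed.

Lemma unfreeze n (L : 'I_n -> seq nat) phi w d v : 3 <= n ->
  (forall v, uniq (L v) /\ size (L v) = 3) ->
  Lcolouring L phi -> d != phi w ->
  (forall y, cycle_adj y w -> phi y != d) ->
  sh v 1 = w -> ~ freev L phi v -> freev L (upd phi w d) v.
Proof.
move=> n3 Ls [inL prop] dn nb Sv nfv.
have vw : v != w by rewrite -Sv eq_sym sh1_neq //; lia.
have hit : forall e, e \in L v -> e != phi v -> exists y, cycle_adj y v /\ phi y = e.
  move=> e eL en; apply: NNPP => H; apply: nfv; exists e; split=> // y yv.
  by apply/eqP => E; apply: H; exists y.
have [U S3] := Ls v.
have [e1 [e2 [e1L e2L e1n e2n e12]]] := two_others (phi v) U S3.
have [y1 [a1 E1]] := hit _ e1L e1n.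
have [y2 [a2 E2]] := hit _ e2L e2n.
have y12 : y1 != y2 by apply/eqP => E; move: e12; rewrite -E1 -E2 E eqxx.
(* one of y1 y2 is w *)
have key : forall ya yb ea eb, cycle_adj ya v -> cycle_adj yb v -> phi ya = ea ->
    phi yb = eb -> ea != eb -> ya = w -> ea \in L v -> ea != phi v ->
    freev L (upd phi w d) v.
  move=> ya yb ea eb aa ab Ea Eb eab yaw eaL ean.
  exists ea; split=> //; first by rewrite /upd (negbTE vw).
  move=> y yv; rewrite /upd; case: (eqVneq y w) => [_|yw].
    by rewrite -Ea yaw.
  have ybw : yb != w.
    by apply/eqP => ybw; move: eab; rewrite -Ea -Eb yaw ybw eqxx.
  case: (nbr yv) => [yS|Sy]; first by move: yw; rewrite yS Sv eqxx.
  case: (nbr ab) => [ybS|Syb]; first by move: ybw; rewrite ybS Sv eqxx.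
  have -> : y = yb by apply: sh_inj1; rewrite Sy Syb.
  by rewrite Eb eq_sym.
case: (nbr a1) => [y1S|Sy1].
  by apply: (key y1 y2 e1 e2) => //; rewrite y1S.
case: (nbr a2) => [y2S|Sy2].
  by apply: (key y2 y1 e2 e1) => //; [rewrite eq_sym | rewrite y2S].
by move: y12; rewrite (sh_inj1 (etrans Sy1 (esym Sy2))) eqxx.
Qed.

Lemma reach_free n (L : 'I_n -> seq nat) k : 3 <= n ->
  (forall v, uniq (L v) /\ size (L v) = 3) ->
  forall phi x, Lcolouring L phi -> freev L phi (sh x k) ->
  exists psi, [/\ reconfig L phi psi, Lcolouring L psi & freev L psi x].
Proof.
move=> n3 Ls; elim: k => [|k IH] phi x col fr.
  by exists phi; split=> //; [apply: rt_refl | rewrite sh0 in fr].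
move: fr; rewrite -addn1 -sh_sh => fr.
have [fv|nfv] := classic (freev L phi (sh x k)); first exact: IH.
case: fr => d [dL dn nb].
have [st col'] := step_upd (ltnW n3) col dL dn nb.
have fv' := unfreeze n3 Ls col dn nb erefl nfv.
have [psi [r c f]] := IH _ _ col' fv'.
exists psi; split=> //; apply: rt_trans r; exact: rt_step.
Qed.

Lemma pred_sh n (u : 'I_n) : sh (sh u n.-1) 1 = u.
Proof.
rewrite sh_sh; apply: val_inj => /=.
have n0 := ord_gt0 u.
by rewrite addn1 prednK // modnDr modn_small.
Qed.

Lemma reach_c n (L : 'I_n -> seq nat) u c phi : 3 <= n ->
  (forall v, uniq (L v) /\ size (L v) = 3) ->
  c \in L u -> c \notin L (sh u 1) ->
  Lcolouring L phi -> ~ frozen L phi ->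
  exists psi, [/\ reconfig L phi psi, Lcolouring L psi & psi u = c].
Proof.
move=> n3 Ls cL cN col nf.
set x := sh u n.-1.
have [v fv] := not_frozen_free nf.
rewrite (sh_all x v) in fv.
have [p1 [r1 c1 f1]] := reach_free n3 Ls col fv.
have [p2 [r2 c2 n2]] : exists p2, [/\ reconfig L phi p2, Lcolouring L p2 & p2 x != c].
  case: (eqVneq (p1 x) c) => [E|NE]; last by exists p1.
  case: f1 => e [eL en nb].
  have [st c2] := step_upd (ltnW n3) c1 eL en nb.
  exists (upd p1 x e); split=> //; first by apply: rt_trans r1 (rt_step _ _ _ _ st).
  by rewrite /upd eqxx -E.
case: (eqVneq (p2 u) c) => [E|NE]; first by exists p2.
have nb : forall y, cycle_adj y u -> p2 y != c.
  move=> y yu; case: (nbr yu) => [->|Sy].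
    by apply/eqP => E; move: cN; rewrite -E; case: c2 => ->.
  by have -> : y = x by apply: sh_inj1; rewrite Sy pred_sh.
have [st c3] := step_upd (ltnW n3) c2 cL (contra_neq esym NE) nb.
exists (upd p2 u c); split=> //; first by apply: rt_trans r2 (rt_step _ _ _ _ st).
by rewrite /upd eqxx.
Qed.

Lemma sh_n n (u : 'I_n) : sh u n = u.
Proof. by apply: val_inj; rewrite /= modnDr modn_small. Qed.

Lemma sh_neq n (u : 'I_n) a b : 0 < a -> a < b -> b <= n -> sh u a != sh u b.
Proof.
move=> a0 ab bn; apply/eqP => /sh_eq.
have an : a < n by apply: leq_trans bn.
rewrite (modn_small an); move: bn; rewrite leq_eqVlt => /orP [/eqP ->|bn].
  by rewrite modnn => E; move: a0; rewrite E.
by rewrite modn_small // => E; move: ab; rewrite E ltnn.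
Qed.

Lemma adj_sh n (u : 'I_n) j : cycle_adj (sh u j) (sh u j.+1).
Proof. by rewrite adjE sh_sh addn1 eqxx. Qed.

Lemma lemT n (L : 'I_n -> seq nat) u c : 3 <= n ->
  (forall v, uniq (L v) /\ size (L v) = 3) ->
  c \notin L (sh u 1) ->
  forall j, 0 < j < n -> forall phi, Lcolouring L phi -> phi u = c ->
  forall d, d \in L (sh u j) -> d != phi (sh u j.+1) ->
  exists phi', [/\ reconfig L phi phi', Lcolouring L phi', phi' (sh u j) = d &
     forall z, (forall i, 0 < i <= j -> z != sh u i) -> phi' z = phi z].
Proof.
move=> n3 Ls cN; elim=> [//|j IH] /andP [_ jn] phi col phiu d dL dn.
have nbrs : forall y, cycle_adj y (sh u j.+1) -> y = sh u j.+2 \/ y = sh u j.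
  move=> y /nbr [->|E]; first by left; rewrite sh_sh addn1.
  by right; apply: sh_inj1; rewrite E sh_sh addn1.
have fin : forall phi1, Lcolouring L phi1 -> phi1 (sh u j) != d ->
    phi1 (sh u j.+2) != d ->
    exists phi', [/\ reconfig L phi1 phi', Lcolouring L phi', phi' (sh u j.+1) = d &
     forall z, z != sh u j.+1 -> phi' z = phi1 z].
  move=> phi1 c1 h1 h2.
  case: (eqVneq (phi1 (sh u j.+1)) d) => [E|NE].
    by exists phi1; split=> //; apply: rt_refl.
  have nb : forall y, cycle_adj y (sh u j.+1) -> phi1 y != d.
    by move=> y /nbrs [->|->].
  have [st c2] := step_upd (ltnW n3) c1 dL (contra_neq esym NE) nb.
  exists (upd phi1 (sh u j.+1) d); split=> //; first exact: rt_step.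
    by rewrite /upd eqxx.
  by move=> z zn; rewrite /upd (negbTE zn).
have h2 : phi (sh u j.+2) != d by rewrite eq_sym.
case: (eqVneq (phi (sh u j)) d) => [E|NE]; last first.
  have [phi' [r c' e fr]] := fin phi col NE h2.
  exists phi'; split=> // z zi; apply: fr; apply: zi; by rewrite ltnSn.
destruct j as [|j].
  by move: dL cN; rewrite -E sh0 phiu => ->.
have [U S3] := Ls (sh u j.+1).
have [e1 [e2 [e1L e2L e1n e2n e12]]] := two_others d U S3.
have [e [eL en ep]] : exists e, [/\ e \in L (sh u j.+1), e != d & e != phi (sh u j.+2)].
  case: (eqVneq e1 (phi (sh u j.+2))) => [E1|N1]; last by exists e1.
  by exists e2; split=> //; rewrite -E1 eq_sym.
have jn' : 0 < j.+1 < n by rewrite /=; apply: ltnW.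
have [phi1 [r1 c1 e1' fr1]] := IH jn' phi col phiu e eL ep.
have f2 : phi1 (sh u j.+2) = phi (sh u j.+2).
  apply: (fr1); move=> k /andP [k0 kj]; rewrite eq_sym; apply: sh_neq => //; lia.
have f3 : phi1 (sh u j.+3) = phi (sh u j.+3).
  apply: (fr1); move=> k /andP [k0 kj]; rewrite eq_sym; apply: sh_neq => //; lia.
have h1 : phi1 (sh u j.+1) != d by rewrite e1'.
have h3 : phi1 (sh u j.+3) != d by rewrite f3.
have [phi' [r c' e' fr]] := fin phi1 c1 h1 h3.
exists phi'; split=> //; first exact: rt_trans r1 r.
move=> z zi; rewrite fr; last by apply: zi; rewrite /=.
by apply: (fr1); move=> i /andP [i0 ij]; apply: zi; rewrite i0 /=; apply: (leq_trans ij).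
Qed.

Lemma lemA n (L : 'I_n -> seq nat) u c beta : 3 <= n ->
  (forall v, uniq (L v) /\ size (L v) = 3) ->
  c \notin L (sh u 1) -> Lcolouring L beta -> beta u = c ->
  forall k, k < n -> forall phi, Lcolouring L phi -> phi u = c ->
  (forall i, k < i < n -> phi (sh u i) = beta (sh u i)) -> reconfig L phi beta.
Proof.
move=> n3 Ls cN cb bu; elim=> [|k IH] kn phi col phiu ag.
  have -> : phi = beta.
    apply: FunctionalExtensionality.functional_extensionality => z.
    rewrite (sh_all u z); set i := (_ %% n).
    have : i < n by apply: ltn_pmod; lia.
    case: (posnP i) => [-> _|i0 iN]; first by rewrite sh0 phiu.
    by apply: ag; rewrite i0.
  exact: rt_refl.
have agk : phi (sh u k.+2) = beta (sh u k.+2).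
  move: kn; rewrite leq_eqVlt => /orP [/eqP E|lt].
    by rewrite E sh_n phiu.
  by apply: ag; rewrite lt andbT.
have dn : beta (sh u k.+1) != phi (sh u k.+2).
  by rewrite agk; case: cb => _ P; apply: P; apply: adj_sh.
have dL : beta (sh u k.+1) \in L (sh u k.+1) by case: cb.
have kn' : 0 < k.+1 < n by [].
have [phi' [r c' e fr]] := lemT n3 Ls cN kn' col phiu dL dn.
apply: rt_trans r _; apply: IH (ltnW kn) _ c' _ _.
  rewrite fr // => i /andP [i0 ik]; rewrite -{1}(sh_n u) eq_sym; apply: sh_neq => //; lia.
move=> i /andP [ki iN]; case: (eqVneq i k.+1) => [->//|ik].
rewrite fr; first by apply: ag; rewrite iN andbT; lia.
by move=> i' /andP [i0 ik']; rewrite eq_sym; apply: sh_neq => //; lia.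
Qed.

Theorem mainTheorem12 (n : nat) (L : 'I_n -> seq nat) (alpha beta : 'I_n -> nat) :
  3 <= n ->
  (forall v, uniq (L v) /\ size (L v) = 3) ->
  (exists u v, ~ (L u =i L v)) ->
  Lcolouring L alpha -> Lcolouring L beta ->
  ~ frozen L alpha -> ~ frozen L beta ->
  reconfig L alpha beta.
Proof.
move=> n3 Ls [a [b ab]] ca cb fa fb.
have [u nu] : exists u, ~ (L u =i L (sh u 1)).
  apply: NNPP => H.
  have all_eq : forall k, L a =i L (sh a k).
    elim=> [|k IH]; first by rewrite sh0.
    have E : L (sh a k) =i L (sh (sh a k) 1).
      by apply: NNPP => H'; apply: H; exists (sh a k).
    by move=> x; rewrite IH E sh_sh addn1.
  by apply: ab; rewrite (sh_all a b).
have [c [cL cN]] : exists c, c \in L u /\ c \notin L (sh u 1).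
  apply: NNPP => H; apply: nu.
  have [U S3] := Ls u; have [_ S3'] := Ls (sh u 1).
  have sub : {subset L u <= L (sh u 1)}.
    move=> x xL; apply: NNPP => xN; apply: H; exists x; split=> //; exact/negP.
  have le : size (L (sh u 1)) <= size (L u) by rewrite S3 S3'.
  by have [] := uniq_min_size U sub le.
have [a' [ra ca' au]] := reach_c n3 Ls cL cN ca fa.
have [b' [rb cb' bu]] := reach_c n3 Ls cL cN cb fb.
apply: rt_trans ra _; apply: rt_trans _ (rt_sym rb).
apply: (lemA n3 Ls cN cb' bu (k := n.-1)) => //; first lia.
by move=> i; lia.
Qed.
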